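(* Let $A$ and $B$ be finite commutative groups. Fix any isomorphism $\psi:\mathbb{Z}_{q_1}\times\cdots\times\mathbb{Z}_{q_n}\to A$ with positive integers $q_1,\dots,q_n$, and call a map $f:A\to B$ polyfractal if there is a $B$-polyfract $P$ in $X_1,\dots,X_n$ with $P(x)=f(\psi(x_1+q_1\mathbb{Z},\dots,x_n+q_n\mathbb{Z}))$ for all $x\in\mathbb{Z}^n$. Then $$\{f\in B^A : f\text{ is polyfractal}\}=\prod_{p\ \text{prime}}B_p^{A_p},$$ where $A_p$ and $B_p$ are the $p$-primary components of $A$ and $B$, and $\prod_p B_p^{A_p}$ denotes the set of maps $A=\prod_p A_p\to B=\prod_p B_p$ of the form $(a_p)_p\mapsto (f_p(a_p))_p$ with arbitrary $f_p:A_p\to B_p$. In particular this set does not depend on the chosen cyclic decomposition $\psi$.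
   Context: Notation: $\mathbb{Z}_r=\mathbb{Z}/r\mathbb{Z}$. For $\delta\in\mathbb{N}$, $\binom{X}{\delta}=X(X-1)\cdots(X-\delta+1)/\delta!$, $\binom{X}{0}=1$. For a finitely generated commutative group $B$, a $B$-polyfract in $X_1,\dots,X_n$ is a formal finite sum $P=\sum_{\delta\in\mathbb{N}^n}P_\delta\prod_{j=1}^n\binom{X_j}{\delta_j}$ with $P_\delta\in B$, evaluated at $x\in\mathbb{Z}^n$ by $P(x)=\sum_\delta\big(\prod_j\binom{x_j}{\delta_j}\big)P_\delta\in B$. *)

(* Defs.v *)
From HB Require Import structures.
From mathcomp Require Import all_boot all_order all_algebra.
Set Implicit Arguments. Unset Strict Implicit. Unset Printing Implicit Defensive.
Import Order.TTheory GRing.Theory Num.Theory.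
Local Open Scope ring_scope.

(* Z_{q_1} x ... x Z_{q_n}, with q_i = (q i).+1 (positive integers). *)
Definition Zprod (n : nat) (q : 'I_n -> nat) : finType :=
  {dffun forall i : 'I_n, 'I_(q i).+1}.

Definition Zprod_add (n : nat) (q : 'I_n -> nat) (u v : Zprod q) : Zprod q :=
  finfun (fun i => (u i + v i : 'I_(q i).+1)).

Definition Zred (k : nat) (z : int) : 'I_k.+1 :=
  inZp (`|(z %% (k.+1)%:Z)%Z|)%N.
Definition Zprod_red (n : nat) (q : 'I_n -> nat) (x : 'I_n -> int) : Zprod q :=
  finfun (fun i => Zred (q i) (x i)).

Definition is_group_iso (A : zmodType) (n : nat) (q : 'I_n -> nat)
  (psi : Zprod q -> A) : Prop :=
  bijective psi /\ forall u v, psi (Zprod_add u v) = psi u + psi v.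

Definition binz (x : int) (d : nat) : int :=
  ((\prod_(i < d) (x - i%:Z)) %/ (d`!)%:Z)%Z.

(* A B-polyfract in X_1..X_n: formal finite sum  sum_delta P_delta prod_j binom(X_j, delta_j),
   given as a finite list of pairs (delta, P_delta). *)
Definition polyfract (B : zmodType) (n : nat) := seq ({ffun 'I_n -> nat} * B).

Definition pf_eval (B : zmodType) (n : nat) (P : polyfract B n) (x : 'I_n -> int) : B :=
  \sum_(t <- P) t.2 *~ (\prod_(j < n) binz (x j) (t.1 j)).

Definition polyfractal (A B : zmodType) (n : nat) (q : 'I_n -> nat)
  (psi : Zprod q -> A) (f : A -> B) : Prop :=
  exists P : polyfract B n, forall x : 'I_n -> int,
    pf_eval P x = f (psi (Zprod_red q x)).

Definition primary (G : zmodType) (p : nat) (a : G) : Prop :=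
  exists k : nat, a *+ (p ^ k) = 0.

(* f lies in prod_p B_p^{A_p}: f((a_p)_p) = (f_p(a_p))_p for some f_p : A_p -> B_p,
   using A = (+)_p A_p, B = (+)_p B_p (only primes dividing |A||B| contribute). *)
Definition primary_product_map (A B : finZmodType) (f : A -> B) : Prop :=
  exists F : nat -> A -> B,
    (forall p a, prime p -> primary p a -> primary p (F p a)) /\
    (forall a : nat -> A, (forall p, prime p -> primary p (a p)) ->
       f (\sum_(p <- primes (#|A| * #|B|)) a p)
       = \sum_(p <- primes (#|A| * #|B|)) F p (a p)).

(* Main.v *)
Require Import Defs.
From HB Require Import structures.
From mathcomp Require Import all_boot all_order all_algebra all_fingroup all_solvable.
From mathcomp Require Import zify ring lra.
Set Implicit Arguments. Unset Strict Implicit. Unset Printing Implicit Defensive.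
Import Order.TTheory GRing.Theory Num.Theory.
Local Open Scope ring_scope.

Lemma int_ind2 (P : int -> Prop) : P 0 -> (forall x, P x -> P (x + 1)) ->
  (forall x, P (x + 1) -> P x) -> forall x, P x.
Proof.
move=> P0 Hu Hd [n|n].
  elim: n => // n IH; have := Hu _ IH; have -> : Posz n.+1 = n%:Z + 1 by lia. done.
elim: n => [|n IH]; first by apply: Hd.
apply: Hd; have -> : Negz n.+1 + 1 = Negz n by rewrite !NegzE; lia.
exact: IH.
Qed.

Definition Qz (d : nat) (x : int) : int := \prod_(i < d) (x - i%:Z).

Lemma QS_recl d x : Qz d.+1 (x + 1) = (x + 1) * Qz d x.
Proof.
rewrite /Qz big_ord_recl subr0; congr (_ * _); apply: eq_bigr => i _.
rewrite lift0; lia.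
Qed.

Lemma QS_recr d x : Qz d.+1 x = Qz d x * (x - d%:Z).
Proof. by rewrite /Qz big_ord_recr. Qed.

Lemma Qdiff d x : Qz d.+1 (x + 1) = Qz d.+1 x + d.+1%:Z * Qz d x.
Proof. rewrite QS_recl QS_recr; ring. Qed.

Lemma Qz0S d : Qz d.+1 0 = 0.
Proof. by rewrite /Qz big_ord_recl subr0 mul0r. Qed.

Lemma dvd_fact d x : ((d`!)%:Z %| Qz d x)%Z.
Proof.
elim: d x => [|d IH] x; first by rewrite fact0 dvd1z.
elim/int_ind2: x => [|x H|x H].
- by rewrite Qz0S dvdz0.
- by rewrite Qdiff rpredD // factS PoszM dvdz_mul.
- by move: H; rewrite Qdiff rpredDr // factS PoszM dvdz_mul.
Qed.

Lemma binzE x d : binz x d * (d`!)%:Z = Qz d x.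
Proof. by rewrite /binz divzK // dvd_fact. Qed.

Lemma fact_neq0 d : (d`!)%:Z != 0.
Proof. by rewrite eqz_nat -lt0n fact_gt0. Qed.

Lemma binz0 x : binz x 0 = 1.
Proof. by rewrite /binz big_ord0 fact0 divz1. Qed.

Lemma binz0S d : binz 0 d.+1 = 0.
Proof. by rewrite /binz -/(Qz d.+1 0) Qz0S div0z. Qed.

Lemma binz_pascal x d : binz (x + 1) d.+1 = binz x d.+1 + binz x d.
Proof.
apply: (mulIf (fact_neq0 d.+1)).
rewrite mulrDl !binzE Qdiff -binzE -(binzE x d) factS PoszM; ring.
Qed.

Lemma binz_nat (n d : nat) : binz n%:Z d = 'C(n, d)%:Z.
Proof.
elim: n d => [|n IH] [|d]; rewrite ?binz0 ?binz0S ?bin0 ?bin0n //.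
have -> : Posz n.+1 = n%:Z + 1 by lia.
by rewrite binz_pascal !IH binS PoszD addrC.
Qed.
Lemma dvdz_natE (m n : nat) : (m%:Z %| n%:Z)%Z = (m %| n)%N.
Proof. by rewrite dvdzE. Qed.

Lemma logn_lt p m : prime p -> (0 < m)%N -> (logn p m < m)%N.
Proof.
move=> pp m0; apply: (@leq_trans (p ^ logn p m)).
  by apply: ltn_expl; apply: prime_gt1.
by apply: dvdn_leq => //; apply: pfactor_dvdnn.
Qed.

Lemma binlem p b i : prime p -> (0 < i)%N -> (i <= p ^ b)%N ->
  (p ^ (b - logn p i) %| 'C(p ^ b, i))%N.
Proof.
move=> pp i0 ib; have Cgt0 : (0 < 'C(p ^ b, i))%N by rewrite bin_gt0.
have H : (p ^ b %| i * 'C(p ^ b, i))%N.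
  case: i i0 ib {Cgt0} => // i' _ _; rewrite -mul_bin_diag; exact: dvdn_mulr.
move: H; rewrite pfactor_dvdn ?muln_gt0 ?i0 // lognM // => H.
apply: dvdn_trans (pfactor_dvdnn p _); apply: dvdn_exp2l; lia.
Qed.

Lemma Lper p k D : prime p -> forall d, (d <= D)%N -> forall x,
  ((p ^ k)%:Z %| binz (x + (p ^ (k + D))%:Z) d - binz x d)%Z.
Proof.
move=> pp; elim=> [|d IH] dD x; first by rewrite !binz0 subrr dvdz0.
elim/int_ind2: x => [|x H|x H].
- rewrite add0r binz_nat binz0S subr0 dvdz_natE.
  apply: dvdn_trans (binlem _ _ _) => //; last first.
    apply: leq_trans dD _; apply: leq_trans (leq_addl k D) _.
    exact: ltnW (ltn_expl _ (prime_gt1 pp)).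
  apply: dvdn_exp2l; have := logn_lt pp (ltn0Sn d); lia.
- have -> : x + 1 + (p ^ (k + D))%:Z = (x + (p ^ (k + D))%:Z) + 1 by ring.
  rewrite !binz_pascal.
  have -> : binz (x + (p ^ (k + D))%:Z) d.+1 + binz (x + (p ^ (k + D))%:Z) d -
   (binz x d.+1 + binz x d) = (binz (x + (p ^ (k + D))%:Z) d.+1 - binz x d.+1) +
   (binz (x + (p ^ (k + D))%:Z) d - binz x d) by ring.
  by rewrite rpredD // IH // ltnW.
- move: H.
  have -> : x + 1 + (p ^ (k + D))%:Z = (x + (p ^ (k + D))%:Z) + 1 by ring.
  rewrite !binz_pascal.
  have -> : binz (x + (p ^ (k + D))%:Z) d.+1 + binz (x + (p ^ (k + D))%:Z) d -
   (binz x d.+1 + binz x d) = (binz (x + (p ^ (k + D))%:Z) d.+1 - binz x d.+1) +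
   (binz (x + (p ^ (k + D))%:Z) d - binz x d) by ring.
  by rewrite rpredDr // IH // ltnW.
Qed.

Lemma Lcong p k D d x y : prime p -> (d <= D)%N ->
  ((p ^ (k + D))%:Z %| x - y)%Z -> ((p ^ k)%:Z %| binz x d - binz y d)%Z.
Proof.
move=> pp dD /dvdzP [z Hz]; set P := (p ^ (k + D))%:Z.
have -> : x = y + z * P by rewrite -Hz; ring.
clear Hz.
elim/int_ind2: z => [|z H|z H]; first by rewrite mul0r addr0 subrr dvdz0.
- have -> : binz (y + (z + 1) * P) d - binz y d =
    (binz ((y + z * P) + P) d - binz (y + z * P) d) + (binz (y + z * P) d - binz y d).
    by rewrite mulrDl mul1r addrA; ring.
  by rewrite rpredD // Lper.
- move: H; have -> : binz (y + (z + 1) * P) d - binz y d =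
    (binz ((y + z * P) + P) d - binz (y + z * P) d) + (binz (y + z * P) d - binz y d).
    by rewrite mulrDl mul1r addrA; ring.
  by rewrite rpredDl // Lper.
Qed.
Definition Dl (g : int -> int) : int -> int := fun x => g (x + 1) - g x.

Lemma sumlem (a : nat -> int) n S : (n < S)%N ->
  \sum_(0 <= d < S.+1) 'C(n, d)%:Z * (a d + a d.+1) =
  \sum_(0 <= d < S.+1) 'C(n.+1, d)%:Z * a d.
Proof.
move=> nS.
rewrite (eq_bigr (fun d => 'C(n, d)%:Z * a d + 'C(n, d)%:Z * a d.+1)); last by move=> *; rewrite mulrDr.
rewrite big_split /= big_nat_recl // [X in _ + X = _]big_nat_recr //= (@bin_small n S) //.
rewrite big_nat_recl //.
under [in RHS]eq_bigr do rewrite binS PoszD mulrDl.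
rewrite big_split /= !bin0; ring.
Qed.

Lemma NewtonAt n S g x : (n < S)%N ->
  g (x + n%:Z) = \sum_(0 <= d < S) 'C(n, d)%:Z * iter d Dl g x.
Proof.
elim: n S x => [|n IH] S x nS; case: S nS => // S nS.
  rewrite big_nat_recl // bin0 /= addr0 mul1r.
  by rewrite big1 ?addr0 // => d _; rewrite bin0n mul0r.
have -> : x + (n.+1)%:Z = (x + 1) + n%:Z by lia.
rewrite (IH S.+1) //.
transitivity (\sum_(0 <= d < S.+1) 'C(n, d)%:Z * (iter d Dl g x + iter d.+1 Dl g x)); last exact: sumlem.
  apply: eq_bigr => d _; congr (_ * _); rewrite [iter d.+1 _ _ _]/= /Dl; ring.
by apply: ltnW.
Qed.

Definition periodic (N : nat) (g : int -> int) := forall x, g (x + N%:Z) = g x.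

Lemma per_iter N g d : periodic N g -> periodic N (iter d Dl g).
Proof.
move=> Hg; elim: d => //= d IH x; rewrite /Dl.
have -> : x + N%:Z + 1 = (x + 1) + N%:Z by ring.
by rewrite !IH.
Qed.

Lemma per_mul N g : periodic N g -> forall (t : nat) x, g (x + (N * t)%:Z) = g x.
Proof.
move=> Hg; elim=> [|t IH] x; first by rewrite muln0 addr0.
have -> : x + (N * t.+1)%:Z = (x + (N * t)%:Z) + N%:Z by rewrite mulnS PoszD; ring.
by rewrite Hg IH.
Qed.

Lemma PNform N g x : periodic N.+1 g ->
  iter N.+1 Dl g x = - \sum_(0 <= d < N) 'C(N.+1, d.+1)%:Z * iter d.+1 Dl g x.
Proof.
move=> Hg; have := NewtonAt g x (ltnSn N.+1).
rewrite Hg big_nat_recl // big_nat_recr //= bin0 binn mul1r mul1r.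
move=> /eqP; rewrite -subr_eq0 => /eqP H.
by move: H; rewrite opprD addrA subrr add0r => /eqP; rewrite oppr_eq0 addrC addr_eq0 => /eqP.
Qed.
Lemma pdvd_bin p m i : prime p -> (0 < i)%N -> (i < p ^ m)%N -> (p %| 'C(p ^ m, i))%N.
Proof.
move=> pp i0 im; apply: dvdn_trans (binlem pp i0 (ltnW im)).
have Hl : (logn p i < m)%N.
  rewrite -(ltn_exp2l _ _ (prime_gt1 pp)); apply: leq_ltn_trans im.
  by apply: dvdn_leq => //; apply: pfactor_dvdnn.
by rewrite -{1}(expn1 p); apply: dvdn_exp2l; rewrite subn_gt0.
Qed.

Lemma Nil p m N : prime p -> N.+1 = (p ^ m)%N -> forall j g, periodic N.+1 g ->
  forall x, ((p ^ j)%:Z %| iter (j * N.+1) Dl g x)%Z.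
Proof.
move=> pp HN; elim=> [|j IH] g Hg x; first by rewrite expn0 dvd1z.
rewrite mulSn iterD PNform; last exact: per_iter.
rewrite rpredN big_mkord; apply: rpred_sum => d _.
rewrite expnS PoszM; apply: dvdz_mul.
  rewrite dvdz_natE HN; apply: pdvd_bin => //; rewrite -HN ltnS.
  exact: ltn_ord.
by rewrite -iterD addnC iterD; apply: IH; apply: per_iter.
Qed.

Lemma Unat p m N k g : prime p -> N.+1 = (p ^ m)%N -> periodic N.+1 g ->
  forall n : nat, ((p ^ k)%:Z %| g n%:Z -
     \sum_(0 <= d < k * N.+1) iter d Dl g 0 * binz n%:Z d)%Z.
Proof.
move=> pp HN Hg n.
have := NewtonAt g 0 (ltn_addl (k * N.+1) (ltnSn n)); rewrite add0r => ->.
rewrite (big_cat_nat _ (n := k * N.+1)) ?leq_addr //=.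
have -> : \sum_(0 <= d < k * N.+1) 'C(n, d)%:Z * iter d Dl g 0 =
          \sum_(0 <= d < k * N.+1) iter d Dl g 0 * binz n%:Z d.
  by apply: eq_bigr => d _; rewrite binz_nat mulrC.
rewrite [X in X - _]addrC addrK big_nat_cond; apply: rpred_sum => d /andP[/andP[Hd _] _].
apply: dvdz_mull; rewrite -(subnKC Hd) iterD; apply: (Nil pp HN); exact: per_iter.
Qed.

Lemma Uall p m N k g : prime p -> N.+1 = (p ^ m)%N -> periodic N.+1 g ->
  forall x, ((p ^ k)%:Z %| g x -
     \sum_(0 <= d < k * N.+1) iter d Dl g 0 * binz x d)%Z.
Proof.
move=> pp HN Hg x.
set D := (k * N.+1)%N.
set y := x + (p ^ (m + (k + D)) * `|x|)%N%:Z.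
have gy : g y = g x.
  by rewrite /y expnD -HN -mulnA per_mul.
have [n yn] : exists n : nat, y = n%:Z.
  exists (`|y|)%N; rewrite /y; have : (0 < p ^ (m + (k + D)))%N by rewrite expn_gt0 prime_gt0.
  nia.
have Hh : ((p ^ k)%:Z %| \sum_(0 <= d < D) iter d Dl g 0 * binz y d -
                    \sum_(0 <= d < D) iter d Dl g 0 * binz x d)%Z.
  rewrite -sumrB big_mkord; apply: rpred_sum => d _; rewrite -mulrBr; apply: dvdz_mull.
  apply: (@Lcong p k D d y x pp (ltnW (ltn_ord d))).
  rewrite /y addrC addKr addnC expnD mulnAC PoszM.
  by apply: dvdz_mulr; rewrite PoszM; apply: dvdz_mulr; exact: dvdzz.
have := Unat k pp HN Hg n; rewrite -yn gy => H1.
have -> : g x - \sum_(0 <= d < D) iter d Dl g 0 * binz x d =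
  (g x - \sum_(0 <= d < D) iter d Dl g 0 * binz y d) +
  (\sum_(0 <= d < D) iter d Dl g 0 * binz y d - \sum_(0 <= d < D) iter d Dl g 0 * binz x d)
  by ring.
by rewrite rpredD.
Qed.
Lemma killz (B : zmodType) (b : B) (c : nat) (z z' : int) :
  b *+ c = 0 -> (c%:Z %| z - z')%Z -> b *~ z = b *~ z'.
Proof.
move=> Hb /dvdzP [q Hq]; have -> : z = z' + q * c%:Z by rewrite -Hq; ring.
by rewrite mulrzDr (mulrC q) mulrzA -pmulrn Hb mul0rz addr0.
Qed.

Lemma prod_cong (I : finType) (a b : I -> int) (c : int) :
  (forall i, (c %| a i - b i)%Z) -> (c %| \prod_i a i - \prod_i b i)%Z.
Proof.
move=> H; apply: (big_ind2 (fun u v => (c %| u - v)%Z)); [by rewrite subrr dvdz0 | | by []].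
move=> x1 x2 y1 y2 h1 h2.
have -> : x1 * y1 - x2 * y2 = x1 * (y1 - y2) + (x1 - x2) * y2 by ring.
by apply: rpredD; [apply: dvdz_mull | apply: dvdz_mulr].
Qed.

Definition iota_ind (N r : nat) (z : int) : int :=
  if (z %% N%:Z)%Z == r%:Z then 1 else 0.

Lemma iota_per N r : periodic N (iota_ind N r).
Proof. by move=> z; rewrite /iota_ind modzDr. Qed.

Lemma L2 (B : zmodType) n p m N k (G : ('I_n -> int) -> B) :
  prime p -> N.+1 = (p ^ m)%N -> (forall x, G x *+ p ^ k = 0) ->
  (forall x y, (forall j, ((N.+1)%:Z %| x j - y j)%Z) -> G x = G y) ->
  exists P : polyfract B n, forall x, pf_eval P x = G x.
Proof.
move=> pp HN HG0 HGper.
set D := (k * N.+1)%N.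
pose R := {ffun 'I_n -> 'I_N.+1}.
pose Dt := {ffun 'I_n -> 'I_D}.
pose rho (r : R) := fun j => ((r j : nat))%:Z.
pose c (r : nat) (d : nat) := iter d Dl (iota_ind N.+1 r) 0.
pose P : polyfract B n := [seq ([ffun j => ((t.2 : Dt) j : nat)],
   G (rho t.1) *~ \prod_j c (t.1 j) (t.2 j)) | t <- [seq (r, d) | r <- index_enum R, d <- index_enum Dt]].
exists P => x.
rewrite /pf_eval /P big_map big_allpairs /=.
transitivity (\sum_(r : R) G (rho r) *~ \prod_j iota_ind N.+1 (r j) (x j)).
  apply: eq_bigr => r _.
  transitivity (G (rho r) *~ \prod_j \sum_(d : 'I_D) c (r j) d * binz (x j) d).
    rewrite bigA_distr_bigA mulrz_sumr; apply: eq_bigr => dl _ /=.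
    rewrite -mulrzA -big_split /=; congr (_ *~ _); apply: eq_bigr => j _.
    by rewrite ffunE.
  apply: killz (HG0 _) _; rewrite -opprB rpredN; apply: prod_cong => j.
  rewrite -(big_mkord xpredT (fun d => c (r j) d * binz (x j) d)).
  exact: (Uall k pp HN (iota_per N.+1 (r j)) (x j)).
pose a j := `|(x j %% (N.+1)%:Z)%Z|%N.
have aE j : (a j)%:Z = (x j %% (N.+1)%:Z)%Z.
  by rewrite /a gez0_abs // modz_ge0.
have alt j : (a j < N.+1)%N.
  have := ltz_pmod (x j) (ltz_nat 0 N.+1); rewrite -aE ltz_nat; exact.
pose r0 : R := [ffun j => Ordinal (alt j)].
rewrite (bigD1 r0) //= [X in _ + X]big1 ?addr0; last first.
  move=> r Hr.
  have [j Hj] : exists j, r j != r0 j.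
    apply/existsP; move: Hr; apply: contraNT; rewrite negb_exists => /forallP H.
    apply/eqP/ffunP => j; apply/eqP; have := H j; by rewrite negbK.
  rewrite (bigD1 j) //= {1}/iota_ind -aE.
  have -> : ((a j)%:Z == (r j : nat)%:Z) = false.
    apply/negP; rewrite eqz_nat => /eqP H; move: Hj; rewrite ffunE.
    move/negP; apply; apply/eqP; apply: val_inj; by rewrite /= H.
  by rewrite GRing.mul0r mulr0z.
rewrite big1 ?mulr1z; last first.
  by move=> j _; rewrite /iota_ind ffunE /= aE eqxx.
apply: HGper => j; rewrite /rho ffunE /= aE.
apply/dvdzP; exists (- ((x j %/ (N.+1)%:Z)%Z)).
rewrite {2}(divz_eq (x j) (N.+1)%:Z); ring.
Qed.
Section Kill.
Variable G : zmodType.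
Implicit Types y : G.

Lemma K_mod y g a b : y *+ g = 0 -> (a = b %[mod g])%N -> y *+ a = y *+ b.
Proof.
move=> Hy Hab; rewrite (divn_eq a g) (divn_eq b g) Hab !mulrnDr.
by rewrite !(mulnC _ g) !mulrnA Hy !mul0rn.
Qed.

Lemma K_dvd y a b : y *+ a = 0 -> (a %| b)%N -> y *+ b = 0.
Proof. by move=> Hy /dvdnP [q ->]; rewrite mulnC mulrnA Hy mul0rn. Qed.

Lemma K_gcd y a b : y *+ a = 0 -> y *+ b = 0 -> y *+ gcdn a b = 0.
Proof.
move=> Ha Hb; case: (posnP a) => [->|a0]; first by rewrite gcd0n.
case: (Bezoutl b a0) => u _ Hd.
have := K_dvd Ha Hd; rewrite mulrnDr mulnC mulrnA Hb mul0rn addr0; exact.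
Qed.

Lemma K_add y z m : y *+ m = 0 -> z *+ m = 0 -> (y + z) *+ m = 0.
Proof. by move=> H1 H2; rewrite mulrnDl H1 H2 addr0. Qed.

Lemma K_sum (I : Type) (r : seq I) (P : pred I) (F : I -> G) m :
  (forall i, P i -> F i *+ m = 0) -> (\sum_(i <- r | P i) F i) *+ m = 0.
Proof.
move=> H; apply: (big_ind (fun y => y *+ m = 0)) => //; first exact: mul0rn.
by move=> *; apply: K_add.
Qed.

Definition cc (N p : nat) : nat := chinese (N`_p) (N`_p^') 1 0.

Variable N : nat.
Hypothesis N0 : (0 < N)%N.
Hypothesis HGN : forall y, y *+ N = 0.

Lemma cc1 (p : nat) : (cc N p = 1 %[mod N`_p])%N.
Proof. rewrite /cc; apply: chinese_modl; exact: coprime_partC. Qed.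

Lemma cc0 (p : nat) : (N`_p^' %| cc N p)%N.
Proof. by rewrite /dvdn /cc chinese_modr ?mod0n // coprime_partC. Qed.

Lemma prim_part p y : prime p -> primary p y -> y *+ N`_p = 0.
Proof.
move=> pp [j Hj]; have Hg := K_gcd Hj (HGN y).
apply: K_dvd Hg _.
have /(dvdn_pfactor _ _ pp) [i _ Hi] := dvdn_gcdl (p ^ j) N.
have := dvdn_gcdr (p ^ j) N; rewrite Hi pfactor_dvdn // => Hil.
by rewrite p_part dvdn_exp2l.
Qed.

Lemma part_dvd_partC (p q : nat) : prime p -> prime q -> q != p -> (N`_q %| N`_p^')%N.
Proof.
move=> pp pq qp.
have : (N`_q %| N`_p * N`_p^')%N by rewrite partnC // dvdn_part.
rewrite Gauss_dvdr //.
rewrite !p_part coprimeXl // coprimeXr // prime_coprime // dvdn_prime2 //.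
Qed.

Lemma prim_partC (p q : nat) y : prime p -> prime q -> q != p -> primary q y ->
  y *+ N`_p^' = 0.
Proof.
move=> pp pq qp Hy; apply: K_dvd (prim_part pq Hy) _; exact: part_dvd_partC.
Qed.

Lemma pi_kill (p : nat) y : prime p -> (y *+ cc N p) *+ p ^ logn p N = 0.
Proof.
move=> pp; rewrite -mulrnA -p_part.
apply: K_dvd (HGN y) _; rewrite -{1}(partnC p N0) mulnC.
exact: dvdn_mul (cc0 p) (dvdnn _).
Qed.

Lemma pi_prim p y : prime p -> primary p (y *+ cc N p).
Proof. by move=> pp; exists (logn p N); apply: pi_kill. Qed.

Lemma pi_id p y : primary p y -> prime p -> y *+ cc N p = y.
Proof. move=> Hy pp; rewrite (K_mod (prim_part pp Hy) (cc1 p)); exact: mulr1n. Qed.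

Lemma pi_zeroC (p : nat) y : y *+ N`_p^' = 0 -> y *+ cc N p = 0.
Proof. by move=> Hy; apply: K_dvd Hy (cc0 p). Qed.

Lemma pi_sum y : \sum_(p <- primes N) y *+ cc N p = y.
Proof.
rewrite sumrMnr; rewrite -[RHS]mulr1n; apply: K_mod (HGN y) _.
apply/eqP/(modn_partP _ _ N0) => q Hq.
have pq : prime q by move: Hq; rewrite mem_primes => /and3P[].
rewrite (bigD1_seq q) //= ?primes_uniq // -modnDmr.
have -> : ((\sum_(p <- primes N | p != q) cc N p) %% N`_q = 0)%N.
  apply/eqP; rewrite -/(dvdn _ _) big_seq_cond; apply: dvdn_sum => p /andP[Hp Hpq].
  have pp : prime p by move: Hp; rewrite mem_primes => /and3P[].
  apply: dvdn_trans (part_dvd_partC pp pq _) (cc0 p); by rewrite eq_sym.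
by rewrite addn0 cc1.
Qed.
End Kill.
Lemma Zred_val k z : (val (Zred k z))%:Z = (z %% (k.+1)%:Z)%Z.
Proof.
rewrite /Zred /= -modz_nat gez0_abs ?modz_ge0 //.
by rewrite modz_mod.
Qed.

Lemma Zred_add k x y : Zred k (x + y) = Zred k x + Zred k y.
Proof.
apply: val_inj; apply/eqP; rewrite -eqz_nat Zred_val /=.
by rewrite -!modz_nat PoszD -!modz_nat !gez0_abs ?modz_ge0 // !modz_mod modzDml modzDmr eqxx.
Qed.

Section Phi.
Variables (A : zmodType) (n : nat) (q : 'I_n -> nat) (psi : Zprod q -> A).
Hypothesis Hpsi : is_group_iso psi.

Definition Phi (x : 'I_n -> int) : A := psi (Zprod_red q x).

Lemma Phi_ext x y : (forall j, x j = y j) -> Phi x = Phi y.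
Proof. by move=> H; rewrite /Phi; congr psi; apply/ffunP => j; rewrite !ffunE H. Qed.

Lemma PhiD x y : Phi (fun j => x j + y j) = Phi x + Phi y.
Proof.
rewrite /Phi -Hpsi.2; congr psi; apply/ffunP => j; rewrite !ffunE.
exact: Zred_add.
Qed.

Lemma Phi0 : Phi (fun _ => 0) = 0.
Proof.
have H := PhiD (fun _ => 0) (fun _ => 0).
rewrite (@Phi_ext _ (fun _ => 0)) in H; last by move=> j; rewrite addr0.
by apply: (@addrI _ (Phi (fun _ => 0))); rewrite addr0 -H.
Qed.

Lemma PhiMz x z : Phi (fun j => x j * z) = Phi x *~ z.
Proof.
elim/int_ind2: z => [|z H|z H].
- by rewrite mulr0z -Phi0; apply: Phi_ext => j; rewrite mulr0.
- rewrite mulrzDr mulr1z -H -PhiD; apply: Phi_ext => j; ring.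
- apply: (@addIr _ (Phi x)).
  have -> : Phi x *~ z + Phi x = Phi x *~ (z + 1) by rewrite mulrzDr mulr1z.
  by rewrite -H -PhiD; apply: Phi_ext => j; ring.
Qed.

Lemma Phi_surj a : exists x, Phi x = a.
Proof.
case: Hpsi => [[g Hg1 Hg2] _].
exists (fun j => ((g a j : nat))%:Z); rewrite /Phi -[RHS]Hg2; congr psi.
apply/ffunP => j; rewrite ffunE; apply: val_inj; apply/eqP.
by rewrite -eqz_nat Zred_val modz_nat modn_small.
Qed.
End Phi.
Lemma pf_cons (B : zmodType) n (t : {ffun 'I_n -> nat} * B) (P : polyfract B n) x :
  pf_eval (t :: P) x = t.2 *~ (\prod_(j < n) binz (x j) (t.1 j)) + pf_eval P x.
Proof. by rewrite /pf_eval big_cons. Qed.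

Lemma pf_cat (B : zmodType) n (P1 P2 : polyfract B n) x :
  pf_eval (P1 ++ P2) x = pf_eval P1 x + pf_eval P2 x.
Proof. by rewrite /pf_eval big_cat. Qed.

Lemma pf_scale (B : zmodType) n (P : polyfract B n) c x :
  pf_eval [seq (t.1, t.2 *+ c) | t <- P] x = pf_eval P x *+ c.
Proof.
rewrite /pf_eval big_map -sumrMnl; apply: eq_bigr => t _ /=.
by rewrite !pmulrn mulrzAC.
Qed.

Lemma PFper (B : zmodType) n p k (P : polyfract B n) : prime p ->
  (forall t, t \in P -> t.2 *+ p ^ k = 0) ->
  exists M0, forall M x y, (M0 <= M)%N -> (forall j, ((p ^ M)%:Z %| x j - y j)%Z) ->
    pf_eval P x = pf_eval P y.
Proof.
move=> pp; elim: P => [|t P IH] HP.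
  by exists 0%N => M x y _ _; rewrite /pf_eval !big_nil.
have [|M0 HM0] := IH; first by move=> t' Ht'; apply: HP; rewrite inE Ht' orbT.
exists (maxn (k + \sum_(j < n) t.1 j) M0) => M x y; rewrite geq_max => /andP[H1 H2] Hxy.
rewrite !pf_cons (HM0 M x y H2 Hxy); congr (_ + _).
apply: killz (HP t (mem_head _ _)) _; apply: prod_cong => j.
apply: (@Lcong p k (t.1 j) (t.1 j)) => //.
apply: dvdz_trans (Hxy j); rewrite dvdz_natE; apply: dvdn_exp2l.
apply: leq_trans H1; rewrite leq_add2l (bigD1 j) //=; exact: leq_addr.
Qed.

Lemma pf_sumseq (B : zmodType) n (s : seq nat) (g : nat -> ('I_n -> int) -> B) :
  (forall r, r \in s -> exists P : polyfract B n, forall x, pf_eval P x = g r x) ->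
  exists P : polyfract B n, forall x, pf_eval P x = \sum_(r <- s) g r x.
Proof.
elim: s => [|r s IH] H.
  by exists [::] => x; rewrite /pf_eval !big_nil.
have [P1 HP1] := H r (mem_head _ _).
have [|P2 HP2] := IH; first by move=> r' Hr'; apply: H; rewrite inE Hr' orbT.
by exists (P1 ++ P2) => x; rewrite pf_cat HP1 HP2 big_cons.
Qed.
Lemma killA (A : finZmodType) (x : A) : x *+ #|A| = 0.
Proof. rewrite -FinRing.zmodXgE. have := @expg_cardG A [set: A] x. rewrite cardsT inE. by move=> ->. Qed.

Section Main.
Variables (A B : finZmodType) (n : nat) (q : 'I_n -> nat) (psi : Zprod q -> A).
Hypothesis Hpsi : is_group_iso psi.
Variable f : A -> B.

Let N := (#|A| * #|B|)%N.
Let N0 : (0 < N)%N. Proof. by rewrite muln_gt0; apply/andP; split; apply/card_gt0P; exists 0. Qed.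
Let HAN (y : A) : y *+ N = 0. Proof. by rewrite /N mulrnA killA mul0rn. Qed.
Let HBN (y : B) : y *+ N = 0. Proof. by rewrite /N mulnC mulrnA killA mul0rn. Qed.

Definition INV := forall r, prime r -> r \in primes N -> forall u t : A,
  t *+ N`_r^' = 0 -> f (u + t) *+ cc N r = f u *+ cc N r.

Lemma coprime_rC (r : nat) : prime r -> coprime r (N`_r^').
Proof. by move=> pr; rewrite prime_coprime // -p'natE // part_pnat. Qed.

Lemma dir1 : polyfractal psi f -> INV.
Proof.
move=> [P HP] r pr Hr u t Ht.
have [x <-] := Phi_surj Hpsi u; have [y Hy] := Phi_surj Hpsi t.
set P' := [seq (t.1, t.2 *+ cc N r) | t <- P].
have HP' z : pf_eval P' z = f (Phi psi z) *+ cc N r by rewrite pf_scale HP.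
have [M0 HM0] := @PFper B n r (logn r N) P' pr
  (fun t1 Ht1 => ltac:(move: Ht1 => /mapP [t2 _ ->]; exact: pi_kill)).
have : coprimez (N`_r^')%:Z (r ^ M0)%:Z.
  by rewrite coprimezE /= coprime_sym coprimeXl // coprime_rC.
case/coprimezP => [[al be]] /= Hab.
have Et : t = Phi psi (fun j => y j * (be * (r ^ M0)%:Z)).
  rewrite (PhiMz Hpsi) Hy.
  have -> : be * (r ^ M0)%:Z = 1 - al * (N`_r^')%:Z by rewrite -Hab; ring.
  by rewrite mulrzBr mulr1z -mulrzA_C -pmulrn Ht mul0rz subr0.
rewrite Et -(PhiD Hpsi) -!HP'; apply: HM0 (leqnn _) _ => j.
have -> : x j + y j * (be * (r ^ M0)%:Z) - x j = (y j * be) * (r ^ M0)%:Z by ring.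
exact: dvdz_mull (dvdzz _).
Qed.

Lemma dir2 : INV -> polyfractal psi f.
Proof.
move=> Hinv.
have [P HP] : exists P : polyfract B n,
    forall x, pf_eval P x = \sum_(r <- primes N) f (Phi psi x) *+ cc N r.
  apply: pf_sumseq => r Hr.
  have pr : prime r by move: Hr; rewrite mem_primes => /and3P[].
  have HM : ((r ^ logn r N).-1.+1 = r ^ logn r N)%N by rewrite prednK // expn_gt0 prime_gt0.
  apply: (@L2 B n r (logn r N) (r ^ logn r N).-1 (logn r N)) => //.
    by move=> x; apply: pi_kill.
  move=> x y Hxy; rewrite HM in Hxy.
  pose w j := ((x j - y j) %/ (r ^ logn r N)%:Z)%Z.
  have Ex : Phi psi x = Phi psi y + Phi psi (fun j => w j * (r ^ logn r N)%:Z).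
    rewrite -(PhiD Hpsi); apply: Phi_ext => j; rewrite /w divzK //; ring.
  rewrite Ex Hinv //; rewrite (PhiMz Hpsi) pmulrn -mulrzA -PoszM -p_part partnC //.
  rewrite -pmulrn; exact: HAN.
exists P => x; rewrite HP; exact: pi_sum.
Qed.
Lemma inv_ppm : INV -> primary_product_map f.
Proof.
move=> Hinv; exists (fun p a => f a *+ cc N p); split.
  by move=> p a pp _; apply: pi_prim.
move=> a Ha; rewrite -[LHS](pi_sum N0 HBN) -/N.
rewrite big_seq [RHS]big_seq; apply: eq_bigr => r Hr.
have pr : prime r by move: Hr; rewrite mem_primes => /and3P[].
rewrite (bigD1_seq r) ?primes_uniq //= Hinv //.
rewrite big_seq_cond; apply: K_sum => p /andP [Hp Hpr].
have pp : prime p by move: Hp; rewrite mem_primes => /and3P[].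
by apply: (prim_partC N0 HAN pr pp Hpr); apply: Ha.
Qed.

Lemma ppm_inv : primary_product_map f -> INV.
Proof.
move=> [F [HF1 HF2]] r pr Hr u t Ht.
have FE v : f v *+ cc N r = F r (v *+ cc N r).
  rewrite -{1}(pi_sum N0 HAN v) -/N HF2; last by move=> p pp; apply: pi_prim.
  rewrite -sumrMnl (bigD1_seq r) ?primes_uniq //=.
  rewrite (pi_id N0 HBN) //; last by apply: HF1 => //; apply: pi_prim.
  rewrite big_seq_cond big1 ?addr0 // => p /andP [Hp Hpr].
  have pp : prime p by move: Hp; rewrite mem_primes => /and3P[].
  apply: pi_zeroC; apply: (prim_partC N0 HBN pr pp Hpr).
  by apply: HF1 => //; apply: pi_prim.
by rewrite !FE mulrnDl (pi_zeroC Ht) addr0.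
Qed.
End Main.

Unset Implicit Arguments.
Theorem theorem3p17 (A B : finZmodType) (n : nat) (q : 'I_n -> nat)
  (psi : Zprod q -> A) (Hpsi : is_group_iso psi) (f : A -> B) :
  polyfractal psi f <-> primary_product_map f.
Proof.
split => H.
  exact: inv_ppm (dir1 Hpsi H).
exact: (@dir2 A B n q psi Hpsi f (@ppm_inv A B f H)).
Qed.
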